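(* Let $d\ge 3$, $\lambda>0$, $\rho_0=o(1)$, $\mu=\rho_0/(d+\lambda)$. Let $a,b,c\ge0$ be a trajectory of the spectral gradient flow reduced dynamics \[ \dot a=-2\,\mathrm{sgn}(g_{w_\star})\sqrt a,\quad \dot b=-2\,\mathrm{sgn}(g_v)\sqrt b,\quad \dot c=-2\,\mathrm{sgn}(g_\perp)\sqrt c, \] with $a(0)=b(0)=c(0)=\mu$, where $r=a+(1+\lambda)b+(d-2)c$, $g_{w_\star}=4(r+2a-3)$, $g_v=4(1+\lambda)(r+2(1+\lambda)b-1)$, $g_\perp=4(r+2c-1)$, and $\mathrm{sgn}(0)=0$. Let $T_1'=\inf\{t\ge0: r(t)+2(1+\lambda)b(t)\ge1\}$ and $\alpha=\sqrt a$, $\beta=\sqrt b$, $\gamma=\sqrt c$. Then, for $d$ large enough, for all $t\in[0,T_1']$, \[ \alpha(t)=\beta(t)=\gamma(t)=\sqrt\mu+t,\quad\text{equivalently}\quad a(t)=b(t)=c(t)=(\sqrt\mu+t)^2, \] and $T_1'=\Theta((d+\lambda)^{-1/2})$.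
   Context: These ODEs describe the population spectral gradient flow $\dot W=-\mathrm{polar}(\nabla_W\mathcal L(W))$ for the phase-retrieval model $y=(x^\top w_\star)^2+\nu$, $x\sim\mathcal N(0,I_d+\lambda vv^\top)$ with $v\perp w_\star$ unit vectors, network $f_W(x)=\sum_{j=1}^d(w_j^\top x)^2$, in the coordinates $WW^\top=a\,w_\star w_\star^\top+b\,vv^\top+c(I-w_\star w_\star^\top-vv^\top)$; $\mathrm{polar}(A)=A(A^\top A)^{-1/2}$. *)

(* Defs.v *)
From HB Require Import structures.
From mathcomp Require Import all_boot all_order all_algebra.
From mathcomp Require Import all_classical all_reals all_analysis.
Set Implicit Arguments. Unset Strict Implicit. Unset Printing Implicit Defensive.
Import Order.TTheory GRing.Theory Num.Theory.
Import numFieldNormedType.Exports.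
Local Open Scope classical_set_scope.
Local Open Scope ring_scope.

Section Reduced.
Variable R : realType.
Variables (lam : R) (d : nat) (a b c : R -> R).

Definition rr (t : R) : R := a t + (1 + lam) * b t + (d%:R - 2) * c t.
Definition g_w (t : R) : R := 4 * (rr t + 2 * a t - 3).
Definition g_v (t : R) : R := 4 * (1 + lam) * (rr t + 2 * (1 + lam) * b t - 1).
Definition g_perp (t : R) : R := 4 * (rr t + 2 * c t - 1).

Definition T1set : set R := [set t | 0 <= t /\ 1 <= rr t + 2 * (1 + lam) * b t].

(* (a,b,c) is a nonnegative, continuous trajectory on [0,oo) starting at
   (mu,mu,mu) which solves the reduced spectral-gradient-flow ODE
   (with sgn = Num.sg, sgn 0 = 0) at every time t in (0, T1'), i.e. every
   t > 0 such that no s in [0,t] lies in T1set. *)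
Definition sgf_trajectory (mu : R) : Prop :=
  (forall t, 0 <= t -> 0 <= a t /\ 0 <= b t /\ 0 <= c t) /\
  a 0 = mu /\ b 0 = mu /\ c 0 = mu /\
  {within `[0, +oo[, continuous a} /\
  {within `[0, +oo[, continuous b} /\
  {within `[0, +oo[, continuous c} /\
  (forall t, 0 < t -> (forall s, 0 <= s <= t -> ~ T1set s) ->
     is_derive t 1 a (- 2 * Num.sg (g_w t) * Num.sqrt (a t)) /\
     is_derive t 1 b (- 2 * Num.sg (g_v t) * Num.sqrt (b t)) /\
     is_derive t 1 c (- 2 * Num.sg (g_perp t) * Num.sqrt (c t))).
End Reduced.

(* Main.v *)
Require Import Defs.
From HB Require Import structures.
From mathcomp Require Import all_boot all_order all_algebra.
From mathcomp Require Import all_classical all_reals all_analysis.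
From mathcomp.algebra_tactics Require Import ring lra.
Import Order.TTheory GRing.Theory Num.Theory.
Import numFieldNormedType.Exports.
Local Open Scope classical_set_scope.
Local Open Scope ring_scope.

Section Aux.
Variable R : realType.

Lemma cont_helper (f : R -> R) (e t : R) :
  {within `[0, +oo[, continuous f} ->
  {within `[0, t], continuous (fun x => Num.sqrt (f x + e) - x)}.
Proof.
move=> cf.
have cf' : {within `[0, t], continuous f}.
  apply: continuous_subspaceW cf; apply: subset_itvl; by rewrite bnd_simp.
have h1 : {within `[0, t], continuous (fun x => f x + e)}.
  apply: (within_continuousD cf'); apply: continuous_subspaceT => x; exact: cvg_cst.
have h2 : {within `[0, t], continuous (Num.sqrt \o (fun x => f x + e))}.
  apply: within_continuous_comp h1 => y _; exact: sqrt_continuous.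
have h3 : {within `[0, t], continuous (fun x : R => x)}.
  by apply: continuous_subspaceT => x; exact: cvg_id.
exact: (within_continuousB h2 h3).
Qed.

Lemma der_sq (f : R -> R) (x df e : R) : is_derive x 1 f df -> 0 < f x + e ->
  is_derive x 1 (fun y => Num.sqrt (f y + e) - y) (df * (2 * Num.sqrt (f x + e))^-1 - 1).
Proof.
move=> hf hp.
have h1 : is_derive x 1 (fun y => f y + e) (df + 0).
  apply: is_deriveD.
have h2 := @is_derive1_comp R Num.sqrt (fun y => f y + e) x _ _ (is_derive1_sqrt hp) h1.
have h3 : is_derive x 1 (fun y : R => y) 1 by apply: is_derive_id.
have := is_deriveB h2 h3.
rewrite addr0 mulrC. done.
Qed.

Lemma lin_sqrt (f : R -> R) (mu T : R) : 0 < mu -> f 0 = mu ->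
  {within `[0, +oo[, continuous f} ->
  (forall x, 0 < x < T -> is_derive x 1 f (2 * Num.sqrt (f x))) ->
  forall t, 0 <= t <= T -> Num.sqrt (f t) = Num.sqrt mu + t.
Proof.
move=> mu0 f0 cf hd.
have fmu : forall s, 0 <= s <= T -> mu <= f s.
  move=> s /andP[s0 sT]; rewrite le_eqVlt in s0.
  case/predU1P: s0 => [<-|s0]; first by rewrite f0.
  have cf' : {within `[0, s], continuous f}.
    apply: continuous_subspaceW cf; apply: subset_itvl; by rewrite bnd_simp.
  have hd' : forall x, x \in `]0, s[ -> is_derive x 1 f (2 * Num.sqrt (f x)).
    move=> x; rewrite in_itv /= => /andP[x0 xs]; apply: hd. by rewrite x0 (lt_le_trans xs sT).
  have [c cI h] := @MVT R f (fun x => 2 * Num.sqrt (f x)) 0 s s0 hd' cf'.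
  have : 0 <= 2 * Num.sqrt (f c) * (s - 0).
    by apply: mulr_ge0; [apply: mulr_ge0 => //; exact: sqrtr_ge0 | rewrite subr0 ltW].
  rewrite -h f0 subr_ge0 //.
have fpos : forall x, 0 < x <= T -> 0 < f x.
  move=> x /andP[x0 xT]; apply: (lt_le_trans mu0); apply: fmu; by rewrite xT ltW.
move=> t /andP[t0 tT]; rewrite le_eqVlt in t0.
case/predU1P: t0 => [<-|t0]; first by rewrite f0 addr0.
have hd' : forall x, x \in `]0, t[ -> is_derive x 1 (fun y => Num.sqrt (f y + 0) - y)
   (2 * Num.sqrt (f x) * (2 * Num.sqrt (f x + 0))^-1 - 1).
  move=> x; rewrite in_itv /= => /andP[x0 xs].
  apply: der_sq; first by apply: hd; rewrite x0 (lt_le_trans xs tT).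
  rewrite addr0; apply: fpos; by rewrite x0 ltW // (lt_le_trans xs tT).
have [c cI h] := MVT t0 hd' (cont_helper f 0 t cf).
move: cI; rewrite in_itv /= => /andP[c0 ct].
have fc : 0 < f c by apply: fpos; rewrite c0 ltW // (lt_le_trans ct tT).
move: h; rewrite !addr0 mulfV ?subrr ?mul0r; last first.
  by rewrite mulf_neq0 // gt_eqF // sqrtr_gt0.
rewrite f0 subr0 => /eqP; rewrite subr_eq0 => /eqP h.
by rewrite -[X in X = _](subrK t) h.
Qed.

Lemma ub_sq (f D : R -> R) (mu T : R) : 0 <= mu -> f 0 = mu ->
  (forall x, 0 <= x -> 0 <= f x) ->
  {within `[0, +oo[, continuous f} ->
  (forall x, 0 < x < T -> is_derive x 1 f (D x)) ->
  (forall x, 0 < x < T -> D x <= 2 * Num.sqrt (f x)) ->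
  forall t, 0 <= t <= T -> f t <= (Num.sqrt mu + t) ^+ 2.
Proof.
move=> mu0 f0 fnn cf hd hD t /andP[t0 tT]; rewrite le_eqVlt in t0.
case/predU1P: t0 => [<-|t0]; first by rewrite f0 addr0 sqr_sqrtr.
apply/ler_addgt0Pr => eps eps0.
set m := Num.sqrt mu.
have m0 : 0 <= m by apply: sqrtr_ge0.
have mm : m ^+ 2 = mu by rewrite sqr_sqrtr.
set del := eps / (2 * (m + t) + 1).
have den0 : 0 < 2 * (m + t) + 1 by lra.
have del0 : 0 < del by rewrite divr_gt0.
have hdel : del * (2 * (m + t) + 1) = eps by rewrite divfK // gt_eqF.
set e := del ^+ 2.
have e0 : 0 < e by rewrite exprn_gt0.
have hd' : forall x, x \in `]0, t[ -> is_derive x 1 (fun y => Num.sqrt (f y + e) - y)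
   (D x * (2 * Num.sqrt (f x + e))^-1 - 1).
  move=> x; rewrite in_itv /= => /andP[x0 xs].
  apply: der_sq; first by apply: hd; rewrite x0 (lt_le_trans xs tT).
  by have := fnn x (ltW x0); lra.
have [c cI h] := MVT t0 hd' (cont_helper f e t cf).
move: cI; rewrite in_itv /= => /andP[c0 ct].
have fc := fnn c (ltW c0).
have sc : 0 < Num.sqrt (f c + e) by rewrite sqrtr_gt0; lra.
have dc : D c * (2 * Num.sqrt (f c + e))^-1 - 1 <= 0.
  rewrite subr_le0 ler_pdivrMr ?mul1r; last by lra.
  apply: (le_trans (hD c _)); first by rewrite c0 (lt_le_trans ct tT).
  have : Num.sqrt (f c) <= Num.sqrt (f c + e) by rewrite ler_sqrt; lra.
  lra.
have hle : Num.sqrt (f t + e) - t - (Num.sqrt (f 0 + e) - 0) <= 0.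
  by rewrite h; apply: mulr_le0_ge0 => //; lra.
rewrite f0 in hle.
set S := Num.sqrt (f t + e) in hle.
set s := Num.sqrt (mu + e) in hle.
have S0 : 0 <= S by apply: sqrtr_ge0.
have s0 : 0 <= s by apply: sqrtr_ge0.
have SS : S ^+ 2 = f t + e by rewrite sqr_sqrtr //; have := fnn t (ltW t0); lra.
have ss : s ^+ 2 = mu + e by rewrite sqr_sqrtr //; lra.
have h2' : s ^+ 2 <= (m + del) ^+ 2 by rewrite ss -mm /e; nra.
have h2 : s <= m + del by nra.
have h3 : S <= m + del + t by lra.
have h4 : S ^+ 2 <= (m + del + t) ^+ 2 by nra.
rewrite /e in SS. nra.
Qed.
Lemma closed_inf (P : R -> R) : {within `[0, +oo[, continuous P} ->
  [set t | 0 <= t /\ 1 <= P t] !=set0 ->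
  0 <= inf [set t | 0 <= t /\ 1 <= P t] /\ 1 <= P (inf [set t | 0 <= t /\ 1 <= P t]).
Proof.
move=> cP ne; set S := [set t | 0 <= t /\ 1 <= P t].
have lbS : has_lbound S by exists 0 => x [].
have T0 : 0 <= inf S by apply: lb_le_inf => // x [].
split => //.
rewrite leNgt; apply/negP => hlt.
move/subspace_continuousP: cP => /(_ (inf S)) hc.
have Ain : inf S \in `[0, +oo[ by rewrite in_itv /= T0.
move: (hc Ain) => /cvgr_lt /(_ 1 hlt).
rewrite near_withinE /= => /nbhs_ballP [e /= e0 He].

have : inf S + e / 2 <= inf S.
  apply: lb_le_inf => // y [y0 Py].
  have iy : inf S <= y by apply: ge_inf.
  rewrite leNgt; apply/negP => hy.
  have : y \in `[0, +oo[ -> from_subspace `[0, +oo[ P y < 1.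
    apply: He; rewrite /ball /= distrC ger0_norm; lra.
  rewrite in_itv /= y0 /= => /(_ isT). rewrite /from_subspace. lra.
lra.
Qed.

Lemma uniq_traj (lam : R) (d : nat) (a b c : R -> R) (mu T : R) :
  (3 <= d)%N -> 0 < lam -> 0 < mu -> sgf_trajectory lam d a b c mu ->
  (forall s, 0 <= s < T -> ~ T1set lam d a b c s) ->
  forall t, 0 <= t <= T ->
    Num.sqrt (a t) = Num.sqrt mu + t /\ Num.sqrt (b t) = Num.sqrt mu + t /\
    Num.sqrt (c t) = Num.sqrt mu + t.
Proof.
move=> d3 lam0 mu0 [nn [a0 [b0 [c0 [ca [cb [cc hd]]]]]]] av.
have dR : 1 <= d%:R - 2 :> R.
  have : (3%:R <= d%:R :> R) by rewrite ler_nat.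
  lra.
have key : forall x, 0 < x < T ->
   [/\ 0 <= a x, 0 <= b x, 0 <= c x,
    rr lam d a b c x + 2 * (1 + lam) * b x < 1 &
    forall s, 0 <= s <= x -> ~ T1set lam d a b c s].
  move=> x /andP[x0 xT].
  have hx : forall s, 0 <= s <= x -> ~ T1set lam d a b c s.
    move=> s /andP[s0 sx]; apply: av; by rewrite s0 (le_lt_trans sx xT).
  have [na [nb nc]] := nn x (ltW x0).
  split => //.
  rewrite ltNge; apply/negP => h; apply: (hx x); first by rewrite (ltW x0) lexx.
  by split => //; exact: ltW.
have hda : forall x, 0 < x < T -> is_derive x 1 a (2 * Num.sqrt (a x)).
  move=> x xI; have [na nb nc Px hx] := key x xI.
  have [da _] := hd x (proj1 (andP xI)) hx.
  have g : g_w lam d a b c x < 0.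
    move: Px; rewrite /g_w /rr.
    have h1 : 0 <= (1 + lam) * b x by rewrite mulr_ge0 //; lra.
    have h2 : 0 <= (d%:R - 2) * c x by rewrite mulr_ge0 //; lra.
    lra.
  by move: da; rewrite (ltr0_sg g) mulrN1 opprK.
have hdb : forall x, 0 < x < T -> is_derive x 1 b (2 * Num.sqrt (b x)).
  move=> x xI; have [na nb nc Px hx] := key x xI.
  have [_ [db _]] := hd x (proj1 (andP xI)) hx.
  have g : g_v lam d a b c x < 0.
    by rewrite /g_v pmulr_rlt0; lra.
  by move: db; rewrite (ltr0_sg g) mulrN1 opprK.
have ea := @lin_sqrt a mu T mu0 a0 ca hda.
have eb := @lin_sqrt b mu T mu0 b0 cb hdb.
have cub : forall t, 0 <= t <= T -> c t <= (Num.sqrt mu + t) ^+ 2.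
  apply: (@ub_sq c (fun x => - 2 * Num.sg (g_perp lam d a b c x) * Num.sqrt (c x)) mu T
     (ltW mu0) c0 (fun x hx => proj2 (proj2 (nn x hx))) cc).
  - move=> x xI; have [na nb nc Px hx] := key x xI.
    by have [_ [_ dc]] := hd x (proj1 (andP xI)) hx.
  - move=> x xI; have [na nb nc Px hx] := key x xI.
    have sq := sqrtr_ge0 (c x).
    by case: sgrP => _; lra.
have hdc : forall x, 0 < x < T -> is_derive x 1 c (2 * Num.sqrt (c x)).
  move=> x /andP[x0 xT]; have [na nb nc Px hx] := key x (andb_true_intro (conj x0 xT)).
  have [_ [_ dc]] := hd x x0 hx.
  have g : g_perp lam d a b c x < 0.
    have bx : b x = (Num.sqrt mu + x) ^+ 2.
      have ebx : Num.sqrt (b x) = Num.sqrt mu + x by apply: eb; rewrite !ltW.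
      by rewrite -ebx sqr_sqrtr.
    have cx : c x <= b x by rewrite bx; apply: cub; rewrite !ltW.
    move: Px; rewrite /g_perp /rr.
    have h1 : 0 <= lam * b x by rewrite mulr_ge0 //; lra.
    lra.
  by move: dc; rewrite (ltr0_sg g) mulrN1 opprK.
have ec := @lin_sqrt c mu T mu0 c0 cc hdc.
move=> t tI; split; [exact: ea | split; [exact: eb | exact: ec]].
Qed.
End Aux.

Lemma cP (R : realType) lam d (a b c : R -> R) : {within `[0, +oo[, continuous a} ->
  {within `[0, +oo[, continuous b} -> {within `[0, +oo[, continuous c} ->
  {within `[0, +oo[, continuous (fun t => rr lam d a b c t + 2 * (1 + lam) * b t)}.
Proof.
move=> ca cb cc x; rewrite /rr.
apply: cvgD; last by apply: cvgM; [exact: cvg_cst | exact: cb].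
apply: cvgD; last by apply: cvgM; [exact: cvg_cst | exact: cc].
apply: cvgD; first exact: ca.
by apply: cvgM; [exact: cvg_cst | exact: cb].
Qed.

Theorem lemmaC1 (R : realType) (rho0 : nat -> R) :
  (forall n, 0 < rho0 n) -> rho0 @ \oo --> (0 : R) ->
  exists (d0 : nat) (k1 k2 : R), 0 < k1 /\ 0 < k2 /\
  forall (d : nat) (lam : R) (a b c : R -> R),
    (3 <= d)%N -> (d0 <= d)%N -> 0 < lam ->
    let mu := rho0 d / (d%:R + lam) in
    sgf_trajectory lam d a b c mu ->
    let T1 := inf (T1set lam d a b c) in
    T1set lam d a b c !=set0 /\
    (forall t, 0 <= t <= T1 ->
       Num.sqrt (a t) = Num.sqrt mu + t /\
       Num.sqrt (b t) = Num.sqrt mu + t /\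
       Num.sqrt (c t) = Num.sqrt mu + t /\
       a t = (Num.sqrt mu + t) ^+ 2 /\
       b t = (Num.sqrt mu + t) ^+ 2 /\
       c t = (Num.sqrt mu + t) ^+ 2) /\
    k1 / Num.sqrt (d%:R + lam) <= T1 <= k2 / Num.sqrt (d%:R + lam).
Proof.
move=> rpos rcvg.
have : (0:R) < 1/16 by lra.
move=> /(cvgr_lt 0 rcvg) [N _ HN].
exists N, (1/4), 1; split; first lra; split; first lra.
move=> d lam a b c d3 dN lam0 mu traj T1.
have rhos : rho0 d < 1/16 by apply: HN.
have rho0' := rpos d.
have dR : 3 <= d%:R :> R by rewrite (ler_nat R 3 d).
have D0 : 0 < d%:R + lam by lra.
have mu0 : 0 < mu by rewrite divr_gt0.
have nnt := traj.1.
set S := T1set lam d a b c.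
have Pval : forall t Y, a t = Y -> b t = Y -> c t = Y ->
    rr lam d a b c t + 2 * (1 + lam) * b t = (d%:R + 3 * lam + 2) * Y.
  by move=> t Y ha hb hc; rewrite /rr ha hb hc; ring.
set m := Num.sqrt mu.
have m0 : 0 <= m by apply: sqrtr_ge0.
have mm : m ^+ 2 = mu by rewrite sqr_sqrtr // ltW.
have sqE : forall f : R -> R, forall t, 0 <= t -> (forall t, 0 <= t -> 0 <= f t) ->
    Num.sqrt (f t) = m + t -> f t = (m + t) ^+ 2.
  by move=> f t t0 fnn <-; rewrite sqr_sqrtr // fnn.
have fa : forall t, 0 <= t -> 0 <= a t by move=> t /nnt [].
have fb : forall t, 0 <= t -> 0 <= b t by move=> t /nnt [_ []].
have fc : forall t, 0 <= t -> 0 <= c t by move=> t /nnt [_ []].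
have EQT : forall T, (forall s, 0 <= s < T -> ~ S s) -> forall t, 0 <= t <= T ->
    [/\ a t = (m + t) ^+ 2, b t = (m + t) ^+ 2, c t = (m + t) ^+ 2 &
     rr lam d a b c t + 2 * (1 + lam) * b t = (d%:R + 3 * lam + 2) * (m + t) ^+ 2].
  move=> T av t tI.
  have [ea [eb ec]] := @uniq_traj R lam d a b c mu T d3 lam0 mu0 traj av t tI.
  have t0 := proj1 (andP tI).
  have ha := sqE a t t0 fa ea; have hb := sqE b t t0 fb eb; have hc := sqE c t t0 fc ec.
  by split => //; apply: Pval.
have ne : S !=set0.
  case: (pselect (exists s, 0 <= s < 1 /\ S s)) => [[s [_ Ss]]|nS]; first by exists s.
  exists 1.
  have av : forall s, 0 <= s < 1 -> ~ S s by move=> s hs Ss; apply: nS; exists s.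
  have [_ _ _ hP] := EQT 1 av 1 (andb_true_intro (conj ler01 (lexx 1))).
  split; first lra.
  rewrite hP.
  have h1 : 1 <= (m + 1) ^+ 2 by nra.
  have h2 : 1 <= d%:R + 3 * lam + 2 by lra.
  nra.
have lbS : has_lbound S by exists 0 => x [].
have T0 : 0 <= T1 by apply: lb_le_inf => // x [].
have avT : forall s, 0 <= s < T1 -> ~ S s.
  move=> s /andP[_ sT] Ss; have := ge_inf lbS Ss; rewrite leNgt.
  by rewrite /T1 in sT; rewrite sT.
split => //; split.
  move=> t tI.
  have [ea [eb ec]] := @uniq_traj R lam d a b c mu T1 d3 lam0 mu0 traj avT t tI.
  have [ha hb hc _] := EQT T1 avT t tI.
  by do !split.
have ST : S T1 := @closed_inf R _ (@cP R lam d a b c traj.2.2.2.2.1 traj.2.2.2.2.2.1 traj.2.2.2.2.2.2.1) ne.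
have [_ _ _ hP1] := EQT T1 avT T1 (andb_true_intro (conj T0 (lexx T1))).
have P1 := ST.2; rewrite hP1 in P1.
set u := Num.sqrt (d%:R + lam).
have u0 : 0 < u by rewrite sqrtr_gt0.
have uu : u ^+ 2 = d%:R + lam by rewrite sqr_sqrtr // ltW.
have rho_eq : mu * (d%:R + lam) = rho0 d by rewrite /mu divfK // gt_eqF.
apply/andP; split.
  rewrite ler_pdivrMr //.
  have K3 : d%:R + 3 * lam + 2 <= 3 * u ^+ 2 by rewrite uu; lra.
  have mu4 : (m * u) ^+ 2 < 1/16 by rewrite exprMn mm uu rho_eq.
  have mu4' : m * u < 1/4 by nra.
  have z2 : 1 <= 3 * (u * (m + T1)) ^+ 2.
    rewrite exprMn mulrA; apply: (le_trans P1); apply: ler_wpM2r => //; exact: sqr_ge0.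
  have z0 : 0 <= u * (m + T1) by apply: mulr_ge0; [exact: ltW | lra].
  have z1 : 1/2 <= u * (m + T1).
    move: z0 z2; generalize (u * (m + T1)) => z z0 z2; nra.
  have mu0' : 0 <= m * u by apply: mulr_ge0; [exact: m0 | exact: ltW].
  move: z1 mu4'; rewrite mulrDr mulrC => z1 mu4'.
  lra.
rewrite leNgt; apply/negP => hlt.
have s00 : 0 <= 1 / u by rewrite divr_ge0 // ltW.
have [_ _ _ hP] := EQT T1 avT (1 / u) (andb_true_intro (conj s00 (ltW hlt))).
have Ss : S (1 / u).
  split => //; rewrite hP.
  have hs : (1 / u) * u = 1 by rewrite mul1r mulVf // gt_eqF.
  have h1 : (1 / u) ^+ 2 <= (m + 1 / u) ^+ 2 by nra.
  have h2 : u ^+ 2 <= d%:R + 3 * lam + 2 by rewrite uu; lra.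
  nra.
have := ge_inf lbS Ss; rewrite leNgt.
by rewrite /T1 in hlt; rewrite hlt.
Qed.
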